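(* Let $X$ be a shift space over $\mathcal{A}_3=\{1,2,3\}$, let $\sigma\in\mathcal{S}_3$ be a morphism that is not left-invariant (resp. not right-invariant), and let $Y$ be the image of $X$ under $\sigma$. If $v\in\mathcal{L}(X)$ is a dendric bispecial factor, then every dendric extended image $u$ of $v$ satisfies $\mathcal{C}^-_Y(u)=\emptyset$ (resp. $\mathcal{C}^+_Y(u)=\emptyset$). In particular, if $X$ is dendric and $\sigma\in\mathrm{DP}(X)$, then $\mathcal{C}^-(Y)=\mathcal{C}^-_Y(\varepsilon)\ne\emptyset$ (resp. $\mathcal{C}^+(Y)=\mathcal{C}^+_Y(\varepsilon)\ne\emptyset$).
   Context: A shift space over $\mathcal{A}$ is a closed shift-invariant $X\subseteq\mathcal{A}^{\mathbb{Z}}$ in which all letters occur, with factor set $\mathcal{L}(X)$ ($\varepsilon$ the empty word). For $w\in\mathcal{L}(X)$, $\mathcal{E}_X(w)$ is the bipartite graph with left vertices $a^-$ ($aw\in\mathcal{L}(X)$), right vertices $b^+$ ($wb\in\mathcal{L}(X)$), edges $\{a^-,b^+\}$ ($awb\in\mathcal{L}(X)$); $w$ is bispecial if it has at least two left and two right vertices, dendric if $\mathcal{E}_X(w)$ is a tree; $X$ is dendric if all factors are. $\mathcal{C}^-_X(w)$ (resp. $\mathcal{C}^+_X(w)$): letters $a$ such that removing $a^-$ (resp. $a^+$) and resulting isolated vertices from $\mathcal{E}_X(w)$ leaves a disconnected graph; $\mathcal{C}^\pm(X)=\bigcup_{w\in\mathcal{L}(X)}\mathcal{C}^\pm_X(w)$.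 $\mathcal{S}_3=\{\alpha,\beta,\gamma,\eta\}\cup\{\delta^{(k)},\zeta^{(k)}:k\ge1\}$ with $\alpha:1\mapsto1,2\mapsto12,3\mapsto13$; $\beta:1\mapsto1,2\mapsto12,3\mapsto132$; $\gamma:1\mapsto1,2\mapsto12,3\mapsto123$; $\delta^{(k)}:1\mapsto1,2\mapsto123^k,3\mapsto123^{k+1}$; $\zeta^{(k)}:1\mapsto13^k,2\mapsto12,3\mapsto13^{k+1}$; $\eta:1\mapsto13,2\mapsto12,3\mapsto123$. For $\sigma\in\mathcal{S}_3$, $\mathcal{T}^-(\sigma)$ is the set of longest common suffixes of $\sigma(a_1),\sigma(a_2)$ and $\mathcal{T}^+(\sigma)$ the set of longest common prefixes of $\sigma(b_1),\sigma(b_2)$, over distinct letters; $\sigma$ is left-invariant (right-invariant) if $\mathcal{T}^-(\sigma)$ ($\mathcal{T}^+(\sigma)$) is a singleton. Image of $X$: $Y=\{S^k\sigma(x):x\in X,0\le k<|\sigma(x_0)|\}$. For non-empty $u\in\mathcal{L}(Y)$ containing $1$ there is a unique triple $(s,v,p)$, $v\in\mathcal{L}(X)$, $u=s\sigma(v)p$, with $s$ a proper suffix of $\sigma(a)$ and $p$ a non-empty prefix of $\sigma(b)$ for some $a,b$ with $avb\in\mathcal{L}(X)$; $u$ is an extended image of $v$. $\mathrm{DP}(X)$ is the set of $\sigma\in\mathcal{S}_3$ such that every bispecial extended image (in $Y$) of every $v\in\mathcal{L}(X)$ is dendric. *)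

(* Defs.v *)
From HB Require Import structures.
From mathcomp Require Import all_boot all_order all_algebra.
Set Implicit Arguments. Unset Strict Implicit. Unset Printing Implicit Defensive.
Import GRing.Theory Num.Theory.

Inductive A3 := a1 | a2 | a3.

Definition A3_eqb (x y : A3) : bool :=
  match x, y with a1, a1 | a2, a2 | a3, a3 => true | _, _ => false end.
Lemma A3_eqP : Equality.axiom A3_eqb.
Proof. by case; case; constructor. Qed.
HB.instance Definition _ := hasDecEq.Build A3 A3_eqP.

Definition word := seq A3.
Definition config := int -> A3.
Definition subshift := config -> Prop.

Definition shift (x : config) : config := fun n => (x (n + 1))%R.

Definition lang (X : subshift) (w : word) : Prop :=
  exists x, X x /\ exists i : int,
    forall j : nat, j < size w -> x (i + j%:Z)%R = nth a1 w j.

(* closed for the product topology (discrete alphabet) *)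
Definition closed_shift (X : subshift) : Prop :=
  forall x : config,
    (forall N : nat, exists y, X y /\ forall i : int, (`|i| <= N)%N -> y i = x i) ->
    X x.

Definition shift_space (X : subshift) : Prop :=
  closed_shift X /\
  (forall x, X x <-> X (shift x)) /\
  (forall a : A3, lang X [:: a]).

(* vertices: (false, a) = a^-  (left),  (true, b) = b^+  (right) *)
Definition vertex := (bool * A3)%type.

Definition egv (L : word -> Prop) (w : word) (v : vertex) : Prop :=
  if v.1 then L (rcons w v.2) else L (v.2 :: w).

Definition ege (L : word -> Prop) (w : word) (u v : vertex) : Prop :=
  match u, v with
  | (false, a), (true, b) => L (a :: rcons w b)
  | (true, b), (false, a) => L (a :: rcons w b)
  | _, _ => False
  end.

Fixpoint walk_in (P : vertex -> Prop) (E : vertex -> vertex -> Prop)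
    (x : vertex) (s : seq vertex) : Prop :=
  match s with
  | [::] => True
  | y :: s' => P y /\ E x y /\ walk_in P E y s'
  end.

Definition connected (P : vertex -> Prop) (E : vertex -> vertex -> Prop) : Prop :=
  forall u v, P u -> P v -> exists s, walk_in P E u s /\ last u s = v.

(* no cycle (of length >= 3, with distinct vertices) *)
Definition acyclic (P : vertex -> Prop) (E : vertex -> vertex -> Prop) : Prop :=
  ~ exists x s, [/\ P x, (2 <= size s)%N, uniq (x :: s), walk_in P E x s
                   & E (last x s) x].

Definition is_tree (P : vertex -> Prop) (E : vertex -> vertex -> Prop) : Prop :=
  connected P E /\ acyclic P E.

Definition dendric (L : word -> Prop) (w : word) : Prop :=
  is_tree (egv L w) (ege L w).

Definition bispecial (L : word -> Prop) (w : word) : Prop :=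
  (exists a a', a != a' /\ L (a :: w) /\ L (a' :: w)) /\
  (exists b b', b != b' /\ L (rcons w b) /\ L (rcons w b')).

(* graph obtained by removing vertex r and the resulting isolated vertices *)
Definition removed_vertices (L : word -> Prop) (w : word) (r : vertex) (v : vertex) : Prop :=
  [/\ egv L w v, v != r & exists u, u != r /\ ege L w v u].

Definition Cminus (L : word -> Prop) (w : word) (a : A3) : Prop :=
  egv L w (false, a) /\ ~ connected (removed_vertices L w (false, a)) (ege L w).
Definition Cplus (L : word -> Prop) (w : word) (b : A3) : Prop :=
  egv L w (true, b) /\ ~ connected (removed_vertices L w (true, b)) (ege L w).

Definition Cminus_all (L : word -> Prop) (a : A3) : Prop :=
  exists w, L w /\ Cminus L w a.
Definition Cplus_all (L : word -> Prop) (b : A3) : Prop :=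
  exists w, L w /\ Cplus L w b.

Definition dendric_shift (X : subshift) : Prop :=
  forall w, lang X w -> dendric (lang X) w.

Definition morph := A3 -> word.

Definition alpha : morph := fun c =>
  match c with a1 => [:: a1] | a2 => [:: a1; a2] | a3 => [:: a1; a3] end.
Definition beta : morph := fun c =>
  match c with a1 => [:: a1] | a2 => [:: a1; a2] | a3 => [:: a1; a3; a2] end.
Definition gamma : morph := fun c =>
  match c with a1 => [:: a1] | a2 => [:: a1; a2] | a3 => [:: a1; a2; a3] end.
Definition delta (k : nat) : morph := fun c =>
  match c with
  | a1 => [:: a1]
  | a2 => a1 :: a2 :: nseq k a3
  | a3 => a1 :: a2 :: nseq k.+1 a3
  end.
Definition zeta (k : nat) : morph := fun c =>
  match c with
  | a1 => a1 :: nseq k a3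
  | a2 => [:: a1; a2]
  | a3 => a1 :: nseq k.+1 a3
  end.
Definition eta : morph := fun c =>
  match c with a1 => [:: a1; a3] | a2 => [:: a1; a2] | a3 => [:: a1; a2; a3] end.

Definition in_S3 (s : morph) : Prop :=
  s =1 alpha \/ s =1 beta \/ s =1 gamma \/ s =1 eta \/
  (exists k, (0 < k)%N /\ s =1 delta k) \/ (exists k, (0 < k)%N /\ s =1 zeta k).

Definition img (s : morph) (v : word) : word := flatten (map s v).

Fixpoint lcp (u v : word) : word :=
  match u, v with
  | x :: u', y :: v' => if x == y then x :: lcp u' v' else [::]
  | _, _ => [::]
  end.
Definition lcs (u v : word) : word := rev (lcp (rev u) (rev v)).

(* T^-(s) (resp. T^+(s)) is a singleton *)
Definition left_invariant (s : morph) : Prop :=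
  exists t, forall c1 c2 : A3, c1 != c2 -> lcs (s c1) (s c2) = t.
Definition right_invariant (s : morph) : Prop :=
  exists t, forall c1 c2 : A3, c1 != c2 -> lcp (s c1) (s c2) = t.

(* starting position of s(x_i) in s(x): p(0)=0, p(i+1)=p(i)+|s(x_i)| *)
Definition pos (s : morph) (x : config) (i : int) : int :=
  match i with
  | Posz n => (\sum_(j < n) size (s (x (Posz j))))%:Z
  | Negz n => (- (\sum_(j < n.+1) size (s (x (- (Posz j.+1))%R)))%:Z)%R
  end.

(* Y = { S^k s(x) : x in X, 0 <= k < |s(x_0)| } *)
Definition shift_image (X : subshift) (s : morph) : subshift := fun y =>
  exists x, X x /\ exists k : nat, k < size (s (x 0%R)) /\
    forall (i : int) (j : nat), j < size (s (x i)) ->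
      y (pos s x i + j%:Z - k%:Z)%R = nth a1 (s (x i)) j.

Definition ext_image (X : subshift) (s : morph) (u v : word) : Prop :=
  lang (shift_image X s) u /\ u != [::] /\ a1 \in u /\
  exists (sf pf : word) (a b : A3),
    lang X (a :: rcons v b) /\ u = sf ++ img s v ++ pf /\
    suffix sf (s a) /\ size sf < size (s a) /\
    prefix pf (s b) /\ 0 < size pf.

Definition DP (X : subshift) (s : morph) : Prop :=
  in_S3 s /\
  forall v u, lang X v -> ext_image X s u v -> bispecial (lang (shift_image X s)) u ->
    dendric (lang (shift_image X s)) u.

(* Main.v *)
Require Import Defs.
From HB Require Import structures.
From mathcomp Require Import all_boot all_order all_algebra.
From mathcomp Require Import zify.
From Stdlib Require Import ClassicalEpsilon FunctionalExtensionality.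
Set Implicit Arguments. Unset Strict Implicit. Unset Printing Implicit Defensive.
Import GRing.Theory Num.Theory.

Lemma posS s x (i : int) :
  pos s x (i + 1)%R = (pos s x i + (size (s (x i)))%:Z)%R.
Proof.
case: i => [n|[|m]].
- have -> : (Posz n + 1)%R = Posz n.+1 by lia.
  by rewrite /= big_ord_recr /= PoszD.
- have -> : (Negz 0 + 1)%R = Posz 0 by lia.
  rewrite /= big_ord1 /= big_ord0. apply/esym; exact: addNr.
- have -> : (Negz m.+1 + 1)%R = Negz m by lia.
  rewrite /= (big_ord_recr m.+1) /=.
 set A := (\sum_(_ < _) _)%N. rewrite PoszD opprD -addrA addNr addr0. done.
Qed.

Lemma pos0 s x : pos s x 0%R = 0%R.
Proof. by rewrite /= big_ord0. Qed.

Section Cover.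
Variables (P : int -> int) (f : int -> nat).
Hypothesis P0 : P 0%R = 0%R.
Hypothesis PS : forall i, P (i + 1)%R = (P i + (f i)%:Z)%R.
Hypothesis fpos : forall i, (0 < f i)%N.

Lemma PS' i j : j = (i + 1)%R -> P j = (P i + (f i)%:Z)%R.
Proof. by move=> ->; apply: PS. Qed.

Lemma P_ge (n : nat) : (n%:Z <= P n)%R /\ (P (- n%:Z)%R <= - n%:Z)%R.
Proof.
elim: n => [|n [IH1 IH2]]; first by rewrite P0.
have h1 := PS' (i := n%:Z) (j := n.+1%:Z) ltac:(lia).
have h2 := PS' (i := (- n.+1%:Z)%R) (j := (- n%:Z)%R) ltac:(lia).
have := fpos n%:Z; have := fpos (- n.+1%:Z)%R. lia.
Qed.

Lemma P_cover_n (n : nat) (m : int) : (P (- n%:Z)%R <= m)%R -> (m < P n)%R ->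
  exists i (j : nat), (j < f i)%N /\ m = (P i + j%:Z)%R.
Proof.
elim: n m => [|n IH] m; first by rewrite P0; lia.
have h1 := PS' (i := n%:Z) (j := n.+1%:Z) ltac:(lia).
have h2 := PS' (i := (- n.+1%:Z)%R) (j := (- n%:Z)%R) ltac:(lia).
move=> Hl Hr.
case: (boolP (m < P (- n%:Z)%R)%R) => H1.
  exists (- n.+1%:Z)%R, (absz (m - P (- n.+1%:Z)%R)). split; lia.
case: (boolP (m < P n)%R) => H2.
  apply: IH; lia.
exists (Posz n), (absz (m - P n)). split; lia.
Qed.

Lemma P_cover (m : int) : exists i (j : nat), (j < f i)%N /\ m = (P i + j%:Z)%R.
Proof.
have [A B] := P_ge (absz m).+1.
apply: (P_cover_n (n := (absz m).+1)); lia.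
Qed.

Lemma P_mono (d : nat) i : (P i + (f i)%:Z <= P (i + d.+1%:Z))%R.
Proof.
elim: d => [|d IH].
  have h := PS' (i := i) (j := (i + 1%:Z)%R) ltac:(lia). lia.
have h := PS' (i := (i + d.+1%:Z)%R) (j := (i + d.+2%:Z)%R) ltac:(lia).
lia.
Qed.

Lemma P_uniq i i' (j j' : nat) : (j < f i)%N -> (j' < f i')%N ->
  (P i + j%:Z)%R = (P i' + j'%:Z)%R -> i = i' /\ j = j'.
Proof.
move=> Hj Hj' E.
case: (Order.TotalTheory.ltgtP i i') => H.
- have := P_mono (absz (i' - i - 1)%R) i.
  have -> : (i + Posz (absz (i' - i - 1)%R).+1)%R = i' by lia.
  lia.
- have := P_mono (absz (i - i' - 1)%R) i'.
  have -> : (i' + Posz (absz (i - i' - 1)%R).+1)%R = i by lia.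
  lia.
- subst; split=> //; lia.
Qed.
End Cover.

Definition nxt (s : morph) (c d : A3) : Prop :=
  exists a b (j : nat), j < size (s a) /\ nth a1 (s a ++ s b) j = c /\
                        nth a1 (s a ++ s b) j.+1 = d.

Lemma img_pair (s : morph) (x : config) (y : config) (k : nat) :
  (forall e, 0 < size (s e)) ->
  (forall (i : int) (j : nat), j < size (s (x i)) ->
      y (pos s x i + j%:Z - k%:Z)%R = nth a1 (s (x i)) j) ->
  forall (i : int) (j : nat), j <= size (s (x i)) ->
      y (pos s x i + j%:Z - k%:Z)%R = nth a1 (s (x i) ++ s (x (i + 1)%R)) j.
Proof.
move=> Hsz Hy i j Hj; rewrite nth_cat.
case: ltnP => Hj1; first by apply: Hy.
have Ej : j = size (s (x i)) by lia.
rewrite Ej subnn -(Hy (i + 1)%R 0 (Hsz _)) posS. congr y. lia.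
Qed.

Lemma lang2 X s c d : (forall e, 0 < size (s e)) ->
  lang (shift_image X s) [:: c; d] -> nxt s c d.
Proof.
move=> Hsz [y [[x [Xx [k [Hk Hy]]]]] [i0 Hi]].
have Hc := Hi 0 erefl; have Hd := Hi 1 erefl; simpl in Hc, Hd.
have [i [j [Hj Em]]] := P_cover (P := pos s x) (f := fun i => size (s (x i)))
   (pos0 s x) (posS s x) (fun i => Hsz _) (i0 + k%:Z)%R.
have HP := img_pair Hsz Hy.
exists (x i), (x (i + 1)%R), j; split => //; split.
- rewrite -(HP i j (ltnW Hj)) -Hc. congr y. lia.
- rewrite -(HP i j.+1 Hj) -Hd. congr y. lia.
Qed.

Lemma lang2_ex X s a (j : nat) c d : shift_space X -> (forall e, 0 < size (s e)) ->
  lang X [:: a] -> j < size (s a) -> nth a1 (s a) j = c ->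
  (forall b, nth a1 (s a ++ s b) j.+1 = d) -> lang (shift_image X s) [:: c; d].
Proof.
move=> _ Hsz [x [Xx [i0 Hi0]]] Hj Hc Hd.
have Ha := Hi0 0 erefl; simpl in Ha; subst a.
have cov : forall m, exists p : int * nat, p.2 < size (s (x p.1)) /\ m = (pos s x p.1 + p.2%:Z)%R.
  move=> m; have [i [jj [H1 H2]]] := P_cover (P := pos s x) (f := fun i => size (s (x i)))
   (pos0 s x) (posS s x) (fun i => Hsz _) m.
  by exists (i, jj).
pose g m := proj1_sig (constructive_indefinite_description _ (cov m)).
have gP m : (g m).2 < size (s (x (g m).1)) /\ m = (pos s x (g m).1 + (g m).2%:Z)%R.
  exact: (proj2_sig (constructive_indefinite_description _ (cov m))).
pose y m := nth a1 (s (x (g m).1)) (g m).2.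
have Hy : forall (i : int) (jj : nat), jj < size (s (x i)) ->
      y (pos s x i + jj%:Z - 0%:Z)%R = nth a1 (s (x i)) jj.
  move=> i jj Hjj. rewrite /y.
  set m := (pos s x i + jj%:Z - 0%:Z)%R.
  have [G1 G2] := gP m.
  have [-> ->] := P_uniq (P := pos s x) (f := fun i => size (s (x i))) (pos0 s x) (posS s x) G1 Hjj
     ltac:(rewrite -G2 /m; lia).
  done.
have HP := img_pair Hsz Hy.
exists y; split.
  exists x; split => //; exists 0%N; split; [exact: Hsz|] => //.
exists (pos s x (i0 + 0%:Z)%R + j%:Z)%R => jj Hjj.
case: jj Hjj => [|[|jj]] //= _.
- have := HP (i0 + 0%:Z)%R j (ltnW Hj). rewrite nth_cat Hj => E. rewrite -Hc -E. congr y; lia.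
- have := HP (i0 + 0%:Z)%R j.+1 Hj. rewrite Hd => E; rewrite -E; congr y; lia.
Qed.

Lemma star_connected (P : vertex -> Prop) E h :
  (forall v, P v -> v = h \/ (P h /\ E v h /\ E h v)) -> connected P E.
Proof.
move=> H u v Pu Pv.
case: (H u Pu) => [->|[Ph [Euh Ehu]]]; case: (H v Pv) => [->|[_ [Evh Ehv]]].
- by exists [::].
- by exists [:: v].
- by exists [:: h].
- by exists [:: h; v].
Qed.

Lemma walk_inv (P : vertex -> Prop) E (Q : vertex -> Prop) :
  (forall x y, Q x -> P y -> E x y -> Q y) ->
  forall s x, Q x -> walk_in P E x s -> Q (last x s).
Proof.
move=> H; elim=> [|y s IH] x Qx //= [Py [Exy W]].
exact: (IH y (H x y Qx Py Exy) W).
Qed.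

Lemma not_conn (P : vertex -> Prop) E (Q : vertex -> Prop) u0 v0 :
  P u0 -> P v0 -> Q u0 -> ~ Q v0 -> (forall x y, Q x -> P y -> E x y -> Q y) ->
  ~ connected P E.
Proof.
move=> Pu Pv Qu nQv H C.
have [s [W L]] := C u0 v0 Pu Pv.
apply: nQv; rewrite -L; exact: (walk_inv H Qu W).
Qed.

Lemma lang_cat X w w' : lang X (w ++ w') -> lang X w /\ lang X w'.
Proof.
move=> [x [Xx [i H]]]; split.
- exists x; split => //; exists i => j Hj.
  have := H j; rewrite size_cat nth_cat Hj => -> //; lia.
- exists x; split => //; exists (i + (size w)%:Z)%R => j Hj.
  have := H (size w + j)%N; rewrite size_cat nth_cat.
  rewrite (_ : (size w + j < size w) = false); last by lia.
  rewrite (_ : (size w + j - size w)%N = j); last by lia.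
  move=> <-; last by lia.
  congr x; lia.
Qed.

Definition pc_closed (L : word -> Prop) :=
  forall w w', L (w ++ w') -> L w /\ L w'.

Lemma no_Cminus L u a : pc_closed L ->
  (exists p1 p2, forall c, L (c :: u) -> c = p1 \/ c = p2) -> ~ Cminus L u a.
Proof.
move=> HL [p1 [p2 Hp]] [Ha Hnc]; apply: Hnc.
pose d := if a == p1 then p2 else p1.
have Hd : forall c, L (c :: u) -> c != a -> c = d.
  move=> c Hc Hca; rewrite /d.
  case: eqP => [Ea|Na]; case: (Hp c Hc) => Ec //; subst c.
  + by rewrite Ea eqxx in Hca.
  + case: (Hp a Ha) => Ea; [by case: Na | by rewrite Ea eqxx in Hca].
apply: (star_connected (h := (false, d))).
move=> [[|] c] [Hv Hne [w [Hw He]]].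
- right. case: w Hw He => [[|] a'] //= Hw He.
  have Ha' : L (a' :: u) by apply: (proj1 (HL (a' :: u) [:: c] _)); rewrite /= cats1.
  have Ea' : a' = d by apply: Hd => //; apply: contraNneq Hw => ->.
  subst a'.
  split; [split; [done| | exists (true, c); split]| split] => //.
- left. rewrite (Hd c Hv) //; try (apply: contraNneq Hne => -> //).
Qed.

Lemma no_Cplus L u b : pc_closed L ->
  (exists p1 p2, forall c, L (rcons u c) -> c = p1 \/ c = p2) -> ~ Cplus L u b.
Proof.
move=> HL [p1 [p2 Hp]] [Hb Hnc]; apply: Hnc.
pose d := if b == p1 then p2 else p1.
have Hd : forall c, L (rcons u c) -> c != b -> c = d.
  move=> c Hc Hca; rewrite /d.
  case: eqP => [Ea|Na]; case: (Hp c Hc) => Ec //; subst c.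
  + by rewrite Ea eqxx in Hca.
  + case: (Hp b Hb) => Ea; [by case: Na | by rewrite Ea eqxx in Hca].
apply: (star_connected (h := (true, d))).
move=> [[|] c] [Hv Hne [w [Hw He]]].
- left. rewrite (Hd c Hv) //; try (apply: contraNneq Hne => -> //).
- right. case: w Hw He => [[|] b'] //= Hw He.
  have Hb' : L (rcons u b') by apply: (proj2 (HL [:: c] (rcons u b') _)).
  have Eb' : b' = d by apply: Hd => //; apply: contraNneq Hw => ->.
  subst b'.
  split; [split; [done| | exists (false, c); split]| split] => //.
Qed.

Definition okE (l : seq (A3 * A3)) (x y : vertex) : bool :=
  match x, y with
  | (false, a), (true, b) => (a, b) \in l
  | (true, b), (false, a) => (a, b) \in l
  | _, _ => false
  end.

Section Gen.
Variables (X : subshift) (s : morph) (l : seq (A3 * A3)).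
Hypothesis HX : shift_space X.
Hypothesis Hsz : forall e, 0 < size (s e).
Hypothesis Htab : forall e c, nxt s e c -> (e, c) \in l.
Local Notation LY := (lang (shift_image X s)).

Lemma LY_pc : pc_closed LY.
Proof. move=> w w'; exact: lang_cat. Qed.

Lemma LY2 e c : LY [:: e; c] -> (e, c) \in l.
Proof. by move=> /(lang2 Hsz) /Htab. Qed.

Lemma nonempty_noCminus u a :
  (forall c, exists p1 p2, forall e, (e, c) \in l -> e = p1 \/ e = p2) ->
  u != [::] -> ~ Cminus LY u a.
Proof.
move=> Hp; case: u => [|c0 u'] // _.
apply: no_Cminus; first exact: LY_pc.
have [p1 [p2 H]] := Hp c0; exists p1, p2 => e He.
apply: H; apply: LY2.
exact: (proj1 (lang_cat (w := [:: e; c0]) (w' := u') He)).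
Qed.

Lemma nonempty_noCplus u b :
  (forall c, exists p1 p2, forall e, (c, e) \in l -> e = p1 \/ e = p2) ->
  u != [::] -> ~ Cplus LY u b.
Proof.
move=> Hp; case: u => [|c0 u'] // _.
apply: no_Cplus; first exact: LY_pc.
have [p1 [p2 H]] := Hp (last c0 u'); exists p1, p2 => e He.
apply: H; apply: LY2.
move: He; rewrite lastI -!cats1 -catA /= => He.
exact: (proj2 (lang_cat He)).
Qed.

Lemma not_conn_eps rv u0 v0 (Q : pred vertex) :
  removed_vertices LY [::] rv u0 -> removed_vertices LY [::] rv v0 -> Q u0 -> ~~ Q v0 ->
  (forall x y, Q x -> y != rv -> okE l x y -> Q y) ->
  ~ connected (removed_vertices LY [::] rv) (ege LY [::]).
Proof.
move=> Pu Pv Qu nQv H.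
apply: (not_conn (Q := Q) Pu Pv Qu); first by apply/negP.
move=> x y Qx [_ Hne _] Exy; apply: (H x y Qx Hne).
move: Exy; case: x {Qx} => [[|] a]; case: y {Hne} => [[|] b] //= /LY2 //.
Qed.

Lemma rv_left rv a b : LY [:: a; b] -> (false, a) != rv -> (true, b) != rv ->
  removed_vertices LY [::] rv (false, a).
Proof.
move=> H n1 n2; split => //.
- exact: (proj1 (lang_cat (w := [:: a]) (w' := [:: b]) H)).
- by exists (true, b).
Qed.

Lemma rv_right rv a b : LY [:: a; b] -> (false, a) != rv -> (true, b) != rv ->
  removed_vertices LY [::] rv (true, b).
Proof.
move=> H n1 n2; split => //.
- exact: (proj2 (lang_cat (w := [:: a]) (w' := [:: b]) H)).
- by exists (false, a).
Qed.

Lemma LY_nil : forall a, LY [:: a] -> LY [::].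
Proof. move=> a H; exact: (proj1 (lang_cat (w := [::]) (w' := [:: a]) H)). Qed.

Lemma left_concl r :
  (forall c, exists p1 p2, forall e, (e, c) \in l -> e = p1 \/ e = p2) ->
  Cminus LY [::] r ->
  (forall v u, lang X v -> dendric (lang X) v -> bispecial (lang X) v ->
        ext_image X s u v -> dendric LY u ->
        forall a, ~ Cminus LY u a) /\
     (dendric_shift X -> DP X s ->
        (forall a, Cminus_all LY a <-> Cminus LY [::] a) /\
        exists a, Cminus LY [::] a).
Proof.
move=> Hp Hr; split.
- move=> v u _ _ _ [_ [Hu _]] _ a; exact: nonempty_noCminus.
- move=> _ _; split; last by exists r.
  move=> a; split.
  + move=> [w [_ Hw]]; case: w Hw => [|c w] // Hw.
    by case: (nonempty_noCminus (u := c :: w) (a := a) Hp).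
  + move=> H; exists [::]; split => //; exact: (LY_nil H.1).
Qed.

Lemma right_concl r :
  (forall c, exists p1 p2, forall e, (c, e) \in l -> e = p1 \/ e = p2) ->
  Cplus LY [::] r ->
  (forall v u, lang X v -> dendric (lang X) v -> bispecial (lang X) v ->
        ext_image X s u v -> dendric LY u ->
        forall b, ~ Cplus LY u b) /\
     (dendric_shift X -> DP X s ->
        (forall b, Cplus_all LY b <-> Cplus LY [::] b) /\
        exists b, Cplus LY [::] b).
Proof.
move=> Hp Hr; split.
- move=> v u _ _ _ [_ [Hu _]] _ a; exact: nonempty_noCplus.
- move=> _ _; split; last by exists r.
  move=> a; split.
  + move=> [w [_ Hw]]; case: w Hw => [|c w] // Hw.
    by case: (nonempty_noCplus (u := c :: w) (b := a) Hp).
  + move=> H; exists [::]; split => //; exact: (LY_nil H.1).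
Qed.

End Gen.

Definition l_beta := [:: (a1,a2); (a1,a3); (a3,a2); (a1,a1); (a2,a1)].

Lemma tab_beta e c : nxt beta e c -> (e, c) \in l_beta.
Proof.
move=> [a [b [j [Hj [<- <-]]]]].
by case: a Hj; case: b; case: j => [|[|[|j]]].
Qed.

Lemma sz_beta e : 0 < size (beta e). Proof. by case: e. Qed.

Lemma pre_beta c : exists p1 p2, forall e, (e, c) \in l_beta -> e = p1 \/ e = p2.
Proof.
case: c; [exists a1, a2 | exists a1, a3 | exists a1, a1]; case => //=; auto.
Qed.

Lemma beta_case X : shift_space X ->
  Cminus (lang (shift_image X beta)) [::] a1.
Proof.
move=> HX.
have W a j c d : j < size (beta a) -> nth a1 (beta a) j = c ->
  (forall b, nth a1 (beta a ++ beta b) j.+1 = d) -> lang (shift_image X beta) [:: c; d].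
  by move=> H1 H2 H3; apply: (lang2_ex HX sz_beta (HX.2.2 a) H1 H2 H3).
have W32 := W a3 1 a3 a2 erefl erefl (fun b => erefl).
have W21 := W a2 1 a2 a1 erefl erefl ltac:(by case).
split; first exact: (proj1 (lang_cat (w := [:: a1]) (w' := [:: a2]) (W a2 0 a1 a2 erefl erefl (fun b => erefl)))).
apply: (not_conn_eps (l := l_beta) sz_beta (@tab_beta) (u0 := (false, a3)) (v0 := (false, a2))
          (Q := fun v => v \in [:: (false, a3); (true, a2)])).
- exact: rv_left W32 _ _.
- exact: rv_left W21 _ _.
- done.
- done.
- by move=> [[|] []] [[|] []].
Qed.

Lemma nseq_goal n L j (l : seq (A3 * A3)) : j < n.+1 -> (a3,a3) \in l -> (a3,a1) \in l ->
  (nth a1 (a3 :: nseq n a3 ++ a1 :: L) j, nth a1 (nseq n a3 ++ a1 :: L) j) \in l.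
Proof.
move=> H H1 H2.
have -> : a3 :: nseq n a3 ++ a1 :: L = nseq n.+1 a3 ++ a1 :: L by [].
rewrite !nth_cat !size_nseq !nth_nseq H.
case: ltnP => H3 //.
by have -> : (j - n = 0)%N by lia.
Qed.

Definition l_delta := [:: (a1,a2); (a2,a3); (a3,a3); (a1,a1); (a3,a1)].

Lemma tab_delta k e c : nxt (delta k.+1) e c -> (e, c) \in l_delta.
Proof.
move=> [a [b [j [Hj [<- <-]]]]].
case: a Hj; case: b => /= Hj.
all: case: j Hj => [|[|j]] //= Hj.
all: (first [apply: (@nseq_goal k _ _ l_delta) | apply: (@nseq_goal k.+1 _ _ l_delta)]) => //; rewrite ?size_cat ?size_nseq /= in Hj; lia.
Qed.

Definition l_zeta := [:: (a1,a3); (a3,a3); (a1,a2); (a3,a1); (a2,a1)].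

Lemma tab_zeta k e c : nxt (zeta k.+1) e c -> (e, c) \in l_zeta.
Proof.
move=> [a [b [j [Hj [<- <-]]]]].
case: a Hj; case: b => /= Hj.
all: case: j Hj => [|j] //= Hj.
all: first [ (apply: (@nseq_goal k _ _ l_zeta) => //; rewrite ?size_cat ?size_nseq /= in Hj; lia)
           | (apply: (@nseq_goal k.+1 _ _ l_zeta) => //; rewrite ?size_cat ?size_nseq /= in Hj; lia)
           | (case: j Hj => [|j] //= Hj; lia) ].
Qed.

Lemma Wgen X s a j c d : shift_space X -> (forall e, 0 < size (s e)) ->
  j < size (s a) -> nth a1 (s a) j = c ->
  (forall b, nth a1 (s a ++ s b) j.+1 = d) -> lang (shift_image X s) [:: c; d].
Proof. move=> HX Hsz; exact: lang2_ex HX Hsz (HX.2.2 a). Qed.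

Definition l_gamma := [:: (a1,a2); (a2,a3); (a1,a1); (a2,a1); (a3,a1)].
Definition l_eta := [:: (a1,a3); (a1,a2); (a2,a3); (a3,a1); (a2,a1)].

Lemma tab_gamma e c : nxt gamma e c -> (e, c) \in l_gamma.
Proof.
move=> [a [b [j [Hj [<- <-]]]]].
by case: a Hj; case: b; case: j => [|[|[|j]]].
Qed.

Lemma tab_eta e c : nxt Defs.eta e c -> (e, c) \in l_eta.
Proof.
move=> [a [b [j [Hj [<- <-]]]]].
by case: a Hj; case: b; case: j => [|[|[|j]]].
Qed.

Lemma sz_gamma e : 0 < size (gamma e). Proof. by case: e. Qed.
Lemma sz_eta e : 0 < size (Defs.eta e). Proof. by case: e. Qed.
Lemma sz_delta k e : 0 < size (delta k e). Proof. by case: e. Qed.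
Lemma sz_zeta k e : 0 < size (zeta k e). Proof. by case: e. Qed.

Lemma pre_delta c : exists p1 p2, forall e, (e, c) \in l_delta -> e = p1 \/ e = p2.
Proof. case: c; [exists a1, a3 | exists a1, a1 | exists a2, a3]; case => //=; auto. Qed.
Lemma pre_zeta c : exists p1 p2, forall e, (e, c) \in l_zeta -> e = p1 \/ e = p2.
Proof. case: c; [exists a3, a2 | exists a1, a1 | exists a1, a3]; case => //=; auto. Qed.
Lemma pre_eta c : exists p1 p2, forall e, (e, c) \in l_eta -> e = p1 \/ e = p2.
Proof. case: c; [exists a3, a2 | exists a1, a1 | exists a1, a2]; case => //=; auto. Qed.

Lemma suc_gamma c : exists p1 p2, forall e, (c, e) \in l_gamma -> e = p1 \/ e = p2.
Proof. case: c; [exists a2, a1 | exists a3, a1 | exists a1, a1]; case => //=; auto. Qed.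
Lemma suc_delta c : exists p1 p2, forall e, (c, e) \in l_delta -> e = p1 \/ e = p2.
Proof. case: c; [exists a2, a1 | exists a3, a3 | exists a3, a1]; case => //=; auto. Qed.
Lemma suc_zeta c : exists p1 p2, forall e, (c, e) \in l_zeta -> e = p1 \/ e = p2.
Proof. case: c; [exists a3, a2 | exists a1, a1 | exists a3, a1]; case => //=; auto. Qed.
Lemma suc_eta c : exists p1 p2, forall e, (c, e) \in l_eta -> e = p1 \/ e = p2.
Proof. case: c; [exists a3, a2 | exists a3, a1 | exists a1, a1]; case => //=; auto. Qed.

Lemma delta_minus X k : shift_space X -> Cminus (lang (shift_image X (delta k.+1))) [::] a3.
Proof.
move=> HX.
have W23 := @Wgen X (delta k.+1) a2 1 a2 a3 HX (sz_delta k.+1) erefl erefl (fun b => erefl).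
have W12 := @Wgen X (delta k.+1) a2 0 a1 a2 HX (sz_delta k.+1) erefl erefl (fun b => erefl).
split; first exact: (proj2 (lang_cat (w := [:: a2]) (w' := [:: a3]) W23)).
apply: (not_conn_eps (l := l_delta) (sz_delta k.+1) (@tab_delta k) (u0 := (false, a2)) (v0 := (false, a1))
          (Q := fun v => v \in [:: (false, a2); (true, a3)])).
- exact: rv_left W23 _ _.
- exact: rv_left W12 _ _.
- done.
- done.
- by move=> [[|] []] [[|] []].
Qed.

Lemma zeta_minus X k : shift_space X -> Cminus (lang (shift_image X (zeta k.+1))) [::] a3.
Proof.
move=> HX.
have W21 := @Wgen X (zeta k.+1) a2 1 a2 a1 HX (sz_zeta k.+1) erefl erefl ltac:(by case).
have W12 := @Wgen X (zeta k.+1) a2 0 a1 a2 HX (sz_zeta k.+1) erefl erefl (fun b => erefl).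
have W13 := @Wgen X (zeta k.+1) a1 0 a1 a3 HX (sz_zeta k.+1) erefl erefl (fun b => erefl).
split; first exact: (proj2 (lang_cat (w := [:: a1]) (w' := [:: a3]) W13)).
apply: (not_conn_eps (l := l_zeta) (sz_zeta k.+1) (@tab_zeta k) (u0 := (false, a2)) (v0 := (false, a1))
          (Q := fun v => v \in [:: (false, a2); (true, a1)])).
- exact: rv_left W21 _ _.
- exact: rv_left W12 _ _.
- done.
- done.
- by move=> [[|] []] [[|] []].
Qed.

Lemma eta_minus X : shift_space X -> Cminus (lang (shift_image X Defs.eta)) [::] a2.
Proof.
move=> HX.
have W31 := @Wgen X Defs.eta a1 1 a3 a1 HX sz_eta erefl erefl ltac:(by case).
have W12 := @Wgen X Defs.eta a2 0 a1 a2 HX sz_eta erefl erefl (fun b => erefl).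
have W13 := @Wgen X Defs.eta a1 0 a1 a3 HX sz_eta erefl erefl (fun b => erefl).
split; first exact: (proj2 (lang_cat (w := [:: a1]) (w' := [:: a2]) W12)).
apply: (not_conn_eps (l := l_eta) sz_eta (@tab_eta) (u0 := (false, a3)) (v0 := (false, a1))
          (Q := fun v => v \in [:: (false, a3); (true, a1)])).
- exact: rv_left W31 _ _.
- exact: rv_left W13 _ _.
- done.
- done.
- by move=> [[|] []] [[|] []].
Qed.

Lemma gamma_plus X : shift_space X -> Cplus (lang (shift_image X gamma)) [::] a1.
Proof.
move=> HX.
have W12 := @Wgen X gamma a2 0 a1 a2 HX sz_gamma erefl erefl (fun b => erefl).
have W23 := @Wgen X gamma a3 1 a2 a3 HX sz_gamma erefl erefl (fun b => erefl).
split; first exact: (proj1 (lang_cat (w := [:: a1]) (w' := [:: a2]) W12)).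
apply: (not_conn_eps (l := l_gamma) sz_gamma (@tab_gamma) (u0 := (true, a2)) (v0 := (true, a3))
          (Q := fun v => v \in [:: (true, a2); (false, a1)])).
- exact: rv_right W12 _ _.
- exact: rv_right W23 _ _.
- done.
- done.
- by move=> [[|] []] [[|] []].
Qed.

Lemma delta_plus X k : shift_space X -> Cplus (lang (shift_image X (delta k.+1))) [::] a1.
Proof.
move=> HX.
have W23 := @Wgen X (delta k.+1) a2 1 a2 a3 HX (sz_delta k.+1) erefl erefl (fun b => erefl).
have W12 := @Wgen X (delta k.+1) a2 0 a1 a2 HX (sz_delta k.+1) erefl erefl (fun b => erefl).
split; first exact: (proj1 (lang_cat (w := [:: a1]) (w' := [:: a2]) W12)).
apply: (not_conn_eps (l := l_delta) (sz_delta k.+1) (@tab_delta k) (u0 := (true, a2)) (v0 := (true, a3))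
          (Q := fun v => v \in [:: (true, a2); (false, a1)])).
- exact: rv_right W12 _ _.
- exact: rv_right W23 _ _.
- done.
- done.
- by move=> [[|] []] [[|] []].
Qed.

Lemma zeta_plus X k : shift_space X -> Cplus (lang (shift_image X (zeta k.+1))) [::] a3.
Proof.
move=> HX.
have W21 := @Wgen X (zeta k.+1) a2 1 a2 a1 HX (sz_zeta k.+1) erefl erefl ltac:(by case).
have W12 := @Wgen X (zeta k.+1) a2 0 a1 a2 HX (sz_zeta k.+1) erefl erefl (fun b => erefl).
have W13 := @Wgen X (zeta k.+1) a1 0 a1 a3 HX (sz_zeta k.+1) erefl erefl (fun b => erefl).
split; first exact: (proj2 (lang_cat (w := [:: a1]) (w' := [:: a3]) W13)).
apply: (not_conn_eps (l := l_zeta) (sz_zeta k.+1) (@tab_zeta k) (u0 := (true, a2)) (v0 := (true, a1))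
          (Q := fun v => v \in [:: (true, a2); (false, a1)])).
- exact: rv_right W12 _ _.
- exact: rv_right W21 _ _.
- done.
- done.
- by move=> [[|] []] [[|] []].
Qed.

Lemma eta_plus X : shift_space X -> Cplus (lang (shift_image X Defs.eta)) [::] a3.
Proof.
move=> HX.
have W21 := @Wgen X Defs.eta a2 1 a2 a1 HX sz_eta erefl erefl ltac:(by case).
have W12 := @Wgen X Defs.eta a2 0 a1 a2 HX sz_eta erefl erefl (fun b => erefl).
have W13 := @Wgen X Defs.eta a1 0 a1 a3 HX sz_eta erefl erefl (fun b => erefl).
split; first exact: (proj2 (lang_cat (w := [:: a1]) (w' := [:: a3]) W13)).
apply: (not_conn_eps (l := l_eta) sz_eta (@tab_eta) (u0 := (true, a2)) (v0 := (true, a1))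
          (Q := fun v => v \in [:: (true, a2); (false, a1)])).
- exact: rv_right W12 _ _.
- exact: rv_right W21 _ _.
- done.
- done.
- by move=> [[|] []] [[|] []].
Qed.

Lemma li_alpha : left_invariant alpha.
Proof. by exists [::]; case; case. Qed.
Lemma li_gamma : left_invariant gamma.
Proof. by exists [::]; case; case. Qed.
Lemma ri_alpha : right_invariant alpha.
Proof. by exists [:: a1]; case; case. Qed.
Lemma ri_beta : right_invariant beta.
Proof. by exists [:: a1]; case; case. Qed.

Unset Implicit Arguments.
Theorem lemma5p7 (X : subshift) (s : morph) :
  shift_space X -> in_S3 s ->
  (~ left_invariant s ->
     (forall v u, lang X v -> dendric (lang X) v -> bispecial (lang X) v ->
        ext_image X s u v -> dendric (lang (shift_image X s)) u ->
        forall a, ~ Cminus (lang (shift_image X s)) u a) /\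
     (dendric_shift X -> DP X s ->
        (forall a, Cminus_all (lang (shift_image X s)) a <-> Cminus (lang (shift_image X s)) [::] a) /\
        exists a, Cminus (lang (shift_image X s)) [::] a)) /\
  (~ right_invariant s ->
     (forall v u, lang X v -> dendric (lang X) v -> bispecial (lang X) v ->
        ext_image X s u v -> dendric (lang (shift_image X s)) u ->
        forall b, ~ Cplus (lang (shift_image X s)) u b) /\
     (dendric_shift X -> DP X s ->
        (forall b, Cplus_all (lang (shift_image X s)) b <-> Cplus (lang (shift_image X s)) [::] b) /\
        exists b, Cplus (lang (shift_image X s)) [::] b)).
Proof.
move=> HX HS.
have FE : forall M : morph, s =1 M -> s = M.
  by move=> M H; apply: functional_extensionality.
case: HS => [/FE->|[/FE->|[/FE->|[/FE->|[[k [Hk /FE->]]|[k [Hk /FE->]]]]]]].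
- by split => H; exfalso; apply: H; [exact: li_alpha | exact: ri_alpha].
- split => H; last by exfalso; apply: H; exact: ri_beta.
  exact: (left_concl sz_beta (@tab_beta) pre_beta (beta_case HX)).
- split => H; first by exfalso; apply: H; exact: li_gamma.
  exact: (right_concl sz_gamma (@tab_gamma) suc_gamma (gamma_plus HX)).
- split => H.
  + exact: (left_concl sz_eta (@tab_eta) pre_eta (eta_minus HX)).
  + exact: (right_concl sz_eta (@tab_eta) suc_eta (eta_plus HX)).
- case: k Hk => [|k] // _.
  split => H.
  + exact: (left_concl (sz_delta k.+1) (@tab_delta k) pre_delta (delta_minus k HX)).
  + exact: (right_concl (sz_delta k.+1) (@tab_delta k) suc_delta (delta_plus k HX)).
- case: k Hk => [|k] // _.
  split => H.
  + exact: (left_concl (sz_zeta k.+1) (@tab_zeta k) pre_zeta (zeta_minus k HX)).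
  + exact: (right_concl (sz_zeta k.+1) (@tab_zeta k) suc_zeta (zeta_plus k HX)).
Qed.
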